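(* Let $n\ge1$ and let $F$ and $G$ be permutations of $\mathbb{F}_{2^n}$ such that $F(x)=G(x)$ for all $x\in\mathbb{F}_{2^n}\setminus P$, for some nonempty subset $P\subseteq\mathbb{F}_{2^n}$. If $c\in\mathbb{F}_{2^n}$ and $c\neq 1$, then ${}_c\Delta_F\le {}_c\Delta_G+\#P$.
   Context: For $F:\mathbb{F}_{2^n}\to\mathbb{F}_{2^n}$ and $c\in\mathbb{F}_{2^n}$, ${}_cD_aF(x)=F(x+a)+cF(x)$ (characteristic $2$). For $a,b\in\mathbb{F}_{2^n}$, ${}_c\Delta_F(a,b)$ is the number of $x\in\mathbb{F}_{2^n}$ with ${}_cD_aF(x)=b$, and the $c$-differential uniformity is ${}_c\Delta_F=\max\{{}_c\Delta_F(a,b): a,b\in\mathbb{F}_{2^n},\ a\neq 0 \text{ if } c=1\}$. $\#P$ denotes the cardinality of $P$. *)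

(* Defs.v *)
From HB Require Import structures.
From mathcomp Require Import all_boot all_order all_algebra all_field.
Set Implicit Arguments. Unset Strict Implicit. Unset Printing Implicit Defensive.
Import GRing.Theory.
Local Open Scope ring_scope.

(* c-derivative  _cD_a F (x) = F (x + a) + c F(x)  (characteristic 2) *)
Definition cder (K : finFieldType) (F : K -> K) (c a : K) (x : K) : K :=
  F (x + a) + c * F x.

Definition cDelta (K : finFieldType) (F : K -> K) (c a b : K) : nat :=
  #|[set x : K | cder F c a x == b]|.

Definition cDU (K : finFieldType) (F : K -> K) (c : K) : nat :=
  \max_(ab : K * K | (c != 1) || (ab.1 != 0)) cDelta F c ab.1 ab.2.

(* Main.v *)
Require Import Defs.
From HB Require Import structures.
From mathcomp Require Import all_boot all_order all_algebra all_field.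
From mathcomp Require Import ring.
Import GRing.Theory.
Local Open Scope ring_scope.

Lemma pointwise (K : finFieldType) (hchar : 2%N \in [pchar K])
  (F G : K -> K) (hF : bijective F) (P : {set K})
  (hFG : forall x : K, x \notin P -> F x = G x)
  (c : K) (hc : c != 1) (a b : K) :
  (cDelta F c a b <= cDelta G c a b + #|P|)%N.
Proof.
rewrite /cDelta.
set SF := [set x | cder F c a x == b].
set SG := [set x | cder G c a x == b].
set Bd := [set x | (x \in P) || (x + a \in P)].
rewrite -(cardsID Bd SF) addnC leq_add //.
  apply: subset_leq_card; apply/subsetP => x.
  rewrite !inE negb_or => /andP[/andP[hx hxa]]; rewrite /cder.
  by rewrite (hFG _ hx) (hFG _ hxa).
pose f := fun x : K => if x \in P then x else x + a.
have key : forall x y, x \in SF -> y \in SF -> y + a = x -> x = y.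
  move=> x y; rewrite !inE /cder => /eqP hx /eqP hy hyx.
  have hxa : x + a = y by rewrite -hyx -addrA addrr_pchar2 ?addr0.
  rewrite hyx in hy; rewrite hxa in hx.
  have e : F y + c * F x = F x + c * F y by rewrite hx hy.
  have : (1 - c) * (F y - F x) = (F y + c * F x) - (F x + c * F y) by ring.
  rewrite e subrr => /eqP; rewrite mulf_eq0 subr_eq0 eq_sym (negbTE hc) /=.
  rewrite subr_eq0 => /eqP /(bij_inj hF) ->; done.
have inj : {in SF :&: Bd &, injective f}.
  move=> x y /setIP[sx _] /setIP[sy _]; rewrite /f.
  case: ifP => hx; case: ifP => hy => h.
  - by [].
  - exact: (key x y sx sy (esym h)).
  - exact: (esym (key y x sy sx h)).
  - by move/addIr: h.
rewrite -(card_in_imset inj); apply: subset_leq_card; apply/subsetP => z.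
case/imsetP => x; rewrite !inE /f => /andP[_ hb] ->.
by case: ifP => // hx; rewrite hx in hb.
Qed.

Theorem mainTheorem2 (K : finFieldType) (n : nat)
  (hn : (1 <= n)%N) (hchar : 2%N \in [pchar K]) (hcard : #|K| = (2 ^ n)%N)
  (F G : K -> K) (hF : bijective F) (hG : bijective G)
  (P : {set K}) (hP : P != set0)
  (hFG : forall x : K, x \notin P -> F x = G x)
  (c : K) (hc : c != 1) :
  (cDU F c <= cDU G c + #|P|)%N.
Proof.
rewrite /cDU; apply/bigmax_leqP => ab hab.
apply: leq_trans (@pointwise K hchar F G hF P hFG c hc ab.1 ab.2) _.
rewrite leq_add2r.
exact: (@leq_bigmax_cond _ (fun ab : K * K => (c != 1) || (ab.1 != 0)) (fun ab : K * K => cDelta G c ab.1 ab.2) ab hab).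
Qed.
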